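(* Let $\hat q,\hat p$ be $n\times n$ parametric matrices and let $M$ be an invertible $n\times n$ $(\hat q,\hat p)$-Manin matrix over $\mathfrak R$. Let $1\le m\le n$, let $I=(i_1<\dots<i_m)$ be an increasing multi-index and $J=(j_1,\dots,j_m)$ a multi-index with distinct entries, both with entries in $\{1,\dots,n\}$. Then $$\sum_K\varepsilon(\hat p,K^{\tau})\,\mathrm{cdet}_{\hat q}(M_{IK})\,\mathrm{cdet}_{\hat p'}((M^{-1})_{KJ})=\varepsilon(\hat q,J^{\tau})\,\delta_{I,J^{or}},$$ where the sum is over all increasing multi-indices $K=(k_1<\dots<k_m)$ with entries in $\{1,\dots,n\}$, and $\hat p'=(p'_{ij})$ with $p'_{ij}=p_{ij}^{-1}$. In particular, for $m=n$, $$\mathrm{cdet}_{\hat q}(M)\,\mathrm{cdet}_{\hat p'}(M^{-1})=\varepsilon(\hat p,\tau)^{-1}\varepsilon(\hat q,\tau),$$ where $\tau=(n,n-1,\dots,1)$.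
   Context: $\mathfrak R$ is an associative unital algebra over $\mathbb C$. A parametric $n\times n$ matrix is a matrix $\hat q=(q_{ij})$ of nonzero complex numbers with $q_{ij}q_{ji}=1$, $q_{ii}=1$. An $n\times n$ matrix $M$ over $\mathfrak R$ is a $(\hat q,\hat p)$-Manin matrix if $M_{ik}M_{jk}=q_{ji}M_{jk}M_{ik}$ for $i<j$ and all $k$, and $M_{ik}M_{jl}-q_{ji}p_{kl}M_{jl}M_{ik}+p_{kl}M_{il}M_{jk}-q_{ji}M_{jk}M_{il}=0$ for $i<j$, $k<l$. For a multi-index $I=(i_1,\dots,i_r)$: $I^{\tau}=(i_r,\dots,i_1)$ is its reverse; $I^{or}$ is its nondecreasing rearrangement; $\varepsilon(\hat q,I)=0$ if two entries coincide, otherwise $\varepsilon(\hat q,I)=\prod_{s<t,\ i_s>i_t}(-q_{i_si_t})$. For increasing $I=(i_1<\dots<i_r)$ and $\sigma\in S_r$, $\varepsilon(\hat q,I,\sigma)=\prod_{s<t,\ \sigma(s)>\sigma(t)}(-q_{i_{\sigma(s)}i_{\sigma(t)}})$. For any matrix $X$, increasing $I$ and any multi-index $J=(j_1,\dots,j_r)$, $\mathrm{cdet}_{\hat q}(X_{IJ})=\sum_{\sigma\in S_r}\varepsilon(\hat q,I,\sigma)X_{i_{\sigma(1)},j_1}\cdots X_{i_{\sigma(r)},j_r}$ (same formula with any parametric matrix in place of $\hat q$); $\mathrm{cdet}_{\hat q}(X)$ is the case $I=J=(1,\dots,n)$. $\delta_{I,J^{or}}$ is $1$ if $I=J^{or}$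 and $0$ otherwise. *)

(* Defs.v *)
From HB Require Import structures.
From mathcomp Require Import all_boot all_order all_algebra all_fingroup.
From mathcomp Require Import complex.
From mathcomp Require Import reals Rstruct.
Set Implicit Arguments. Unset Strict Implicit. Unset Printing Implicit Defensive.
Import Order.TTheory GRing.Theory Num.Theory.
Local Open Scope ring_scope.

Definition CC : Type := complex Rdefinitions.R.
HB.instance Definition _ := GRing.Field.on CC.

(* Indices 1..n are represented by 'I_n (0-based, order-preserving). *)

Definition parametric (n : nat) (q : 'M[CC]_n) : Prop :=
  forall i j : 'I_n, q i j != 0 /\ q i j * q j i = 1 /\ q i i = 1.

Definition manin (A : algType CC) (n : nat) (q p : 'M[CC]_n) (M : 'M[A]_n) : Prop :=
  (forall i j k : 'I_n, (i < j)%N ->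
     M i k * M j k = q j i *: (M j k * M i k)) /\
  (forall i j k l : 'I_n, (i < j)%N -> (k < l)%N ->
     M i k * M j l - (q j i * p k l) *: (M j l * M i k)
     + p k l *: (M i l * M j k) - q j i *: (M j k * M i l) = 0).

Definition increasing (m n : nat) (I : 'I_m -> 'I_n) : Prop :=
  forall s t : 'I_m, (s < t)%N -> (I s < I t)%N.

Definition mrev (m n : nat) (I : 'I_m -> 'I_n) : 'I_m -> 'I_n :=
  fun s => I (rev_ord s).

Definition eps (n : nat) (q : 'M[CC]_n) (m : nat) (I : 'I_m -> 'I_n) : CC :=
  if [forall s : 'I_m, forall t : 'I_m, (s != t) ==> (I s != I t)]
  then \prod_(s : 'I_m) \prod_(t : 'I_m | (s < t)%N && (I t < I s)%N)
          (- q (I s) (I t))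
  else 0.

Definition eps_perm (n : nat) (q : 'M[CC]_n) (m : nat) (I : 'I_m -> 'I_n)
    (sigma : 'S_m) : CC :=
  \prod_(s : 'I_m) \prod_(t : 'I_m | (s < t)%N && (sigma t < sigma s)%N)
     (- q (I (sigma s)) (I (sigma t))).

Definition cdet (A : algType CC) (n : nat) (q : 'M[CC]_n) (X : 'M[A]_n)
    (m : nat) (I J : 'I_m -> 'I_n) : A :=
  \sum_(sigma : 'S_m)
     eps_perm q I sigma *: \prod_(s < m) X (I (sigma s)) (J s).

Definition morder (m n : nat) (J : 'I_m -> 'I_n) : seq nat :=
  sort leq [seq val (J s) | s <- enum 'I_m].

Definition delta_or (m n : nat) (I J : 'I_m -> 'I_n) : CC :=
  if [seq val (I s) | s <- enum 'I_m] == morder J then 1 else 0.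

Definition pinv (n : nat) (p : 'M[CC]_n) : 'M[CC]_n := map_mx GRing.inv p.

(* Main.v *)
Require Import Defs.
From HB Require Import structures.
From mathcomp Require Import all_boot all_order all_algebra all_fingroup.
From mathcomp Require Import zify.
Set Implicit Arguments. Unset Strict Implicit. Unset Printing Implicit Defensive.
Import Order.TTheory GRing.Theory Num.Theory.
Local Open Scope ring_scope.

Lemma incr_lt (m n : nat) (I : 'I_m -> 'I_n) : increasing I ->
  forall s u, (I s < I u)%N = (s < u)%N.
Proof.
move=> HI s u; case: (ltngtP s u) => h; first by rewrite HI.
  by apply/negbTE; rewrite -leqNgt ltnW // HI.
have -> : s = u by apply: val_inj.
by rewrite ltnn.
Qed.

Lemma incr_inj (m n : nat) (I : 'I_m -> 'I_n) : increasing I -> injective I.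
Proof.
move=> HI s u e; apply: val_inj => /=; case: (ltngtP s u) => // h.
  by have := HI _ _ h; rewrite e ltnn.
by have := HI _ _ h; rewrite e ltnn.
Qed.

Lemma incr_ge (m n : nat) (f : 'I_m -> 'I_n) : increasing f -> forall s : 'I_m, (s <= f s)%N.
Proof.
move=> Hf [s hs] /=; elim: s hs => [|s IH] hs //.
have hs' : (s < m)%N by apply: ltnW.
have := IH hs'; have := Hf (Ordinal hs') (Ordinal hs) (ltnSn s) => /=; lia.
Qed.

Lemma incr_id (m : nat) (f : 'I_m -> 'I_m) : increasing f -> forall s, f s = s.
Proof.
move=> Hf s; apply: val_inj => /=.
have h1 := incr_ge Hf s.
pose g := fun s => rev_ord (f (rev_ord s)).
have Hg : increasing g.
  move=> a b ab; rewrite /g /=.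
  have : (rev_ord b < rev_ord a)%N by rewrite /=; move: (ltn_ord a) (ltn_ord b); lia.
  move/Hf; move: (ltn_ord (f (rev_ord a))) (ltn_ord (f (rev_ord b))); lia.
have := incr_ge Hg (rev_ord s); rewrite /g rev_ordK /=.
move: (ltn_ord s) (ltn_ord (f s)); lia.
Qed.

Lemma incr_perm_id (m n : nat) (K K' : 'I_m -> 'I_n) (pi : 'I_m -> 'I_m) :
  increasing K -> increasing K' -> (forall x, K x = K' (pi x)) -> forall x, pi x = x.
Proof.
move=> HK HK' e; apply: incr_id => a b ab.
by rewrite -(incr_lt HK') -!e HK.
Qed.

Lemma rank_decomp (m n : nat) (L : 'I_m -> 'I_n) : injective L ->
  exists K : 'I_m -> 'I_n, exists rho : 'S_m, increasing K /\ forall s, L s = K (rho s).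
Proof.
move=> HL.
pose r s := #|[set u | (L u < L s)%N]|.
have mono : forall s u, (L s < L u)%N -> (r s < r u)%N.
  move=> s u h; apply: proper_card; apply/properP; split.
    by apply/subsetP => v; rewrite !inE => hv; apply: ltn_trans hv h.
  by exists s; rewrite !inE // ltnn.
have rlt : forall s, (r s < m)%N.
  move=> s; rewrite -[X in (_ < X)%N]card_ord.
  apply: proper_card; apply/properP; split; first by apply/subsetP.
  by exists s; rewrite ?inE ?ltnn.
pose r' s := Ordinal (rlt s).
have r'inj : injective r'.
  move=> s u e; have e' : r s = r u by move: e => /(congr1 val).
  apply: HL; apply: val_inj => /=; case: (ltngtP (L s) (L u)) => // h.
    by have := mono _ _ h; rewrite e' ltnn.
  by have := mono _ _ h; rewrite e' ltnn.
pose rho := perm r'inj.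
exists (fun a => L (rho^-1%g a)), rho; split; last by move=> s; rewrite permK.
move=> a b ab.
set x := (rho^-1)%g a; set y := (rho^-1)%g b.
have hxy : (rho x < rho y)%N by rewrite /x /y !permKV.
case: (ltngtP (L x) (L y)) => // h.
  by have := mono _ _ h; move: hxy; rewrite !permE /=; lia.
have : x = y by apply: HL; apply: val_inj.
by move=> exy; move: hxy; rewrite exy ltnn.
Qed.

Lemma desc_adj (m : nat) (f : 'I_m -> nat) :
  (forall t t1 : 'I_m, val t1 = (val t).+1 -> (f t1 < f t)%N) ->
  forall s u : 'I_m, (s < u)%N -> (f u < f s)%N.
Proof.
move=> H s [u hu] /=; elim: u hu => [|u IH] hu //.
rewrite ltnS leq_eqVlt => /orP [/eqP e|h].
  by apply: H => /=; rewrite e.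
have hu' : (u < m)%N by apply: ltnW.
have := IH hu' h; have := H (Ordinal hu') (Ordinal hu) erefl => /=; lia.
Qed.

Lemma big_split3 (R : Type) (idx : R) (op : Monoid.law idx) m (F : 'I_m -> R)
    (t t1 : 'I_m) : val t1 = (val t).+1 ->
  \big[op/idx]_(s < m) F s =
  op (op (\big[op/idx]_(s < m | (s < t)%N) F s) (op (F t) (F t1)))
     (\big[op/idx]_(s < m | (t1 < s)%N) F s).
Proof.
move: F t t1; case: m => [|m] F t t1 e; first by have := ltn_ord t.
move: e => /= e.
pose G i := F (inord i).
have EF : forall P : pred nat, \big[op/idx]_(s < m.+1 | P (val s)) F s
    = \big[op/idx]_(0 <= i < m.+1 | P i) G i.
  by move=> P; rewrite big_mkord; apply: eq_bigr => s _; rewrite /G inord_val.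
rewrite (EF xpredT) (EF (fun i => i < t)%N) (EF (fun i => t1 < i)%N).
have -> : F t = G t by rewrite /G inord_val.
have -> : F t1 = G t.+1 by rewrite -e /G inord_val.
have ht1 := ltn_ord t1; rewrite e in ht1; have ht := ltn_ord t.
rewrite (@big_cat_nat _ _ _ t 0 m.+1) /=; [|lia|lia].
rewrite (@big_ltn _ _ _ t m.+1); last by lia.
rewrite (@big_ltn _ _ _ t.+1 m.+1); last by lia.
have -> : \big[op/idx]_(0 <= i < m.+1 | (i < t)%N) G i = \big[op/idx]_(0 <= i < t) G i.
  by rewrite (@big_nat_widen _ _ _ 0 t m.+1); last by lia.
rewrite (@big_cat_nat _ _ _ t.+2 0 m.+1) /=; [|lia|lia].
have -> : \big[op/idx]_(0 <= i < t.+2 | (t1 < i)%N) G i = idx.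
  by rewrite big_nat_cond big1 // => i /andP[/andP[_ h1] h2]; lia.
rewrite Monoid.mul1m.
have -> : \big[op/idx]_(t.+2 <= i < m.+1 | (t1 < i)%N) G i = \big[op/idx]_(t.+2 <= i < m.+1) G i.
  rewrite big_nat_cond [in RHS]big_nat_cond; apply: eq_bigl => i.
  by apply/idP/idP; [move=> /andP[h _]| move=> h; apply/andP; split]; lia.
by rewrite !Monoid.mulmA.
Qed.

Lemma val_tperm m (x y z : 'I_m) :
  nat_of_ord (tperm x y z) = if val z == val x then val y else if val z == val y then val x else val z.
Proof.
case: tpermP => [->|->|h1 h2]; first by rewrite eqxx.
  by case: eqP => [->|_]; rewrite ?eqxx.
by case: eqP => [/val_inj//|_]; case: eqP => [/val_inj//|_].
Qed.

Lemma pair_swap (R : Type) (idx : R) (op : Monoid.com_law idx) m (t t1 : 'I_m)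
   (e : val t1 = (val t).+1) (G : 'I_m -> 'I_m -> R) :
 op (\big[op/idx]_(s : 'I_m) \big[op/idx]_(u : 'I_m | (s < u)%N) G (tperm t t1 s) (tperm t t1 u)) (G t t1)
 = op (\big[op/idx]_(s : 'I_m) \big[op/idx]_(u : 'I_m | (s < u)%N) G s u) (G t1 t).
Proof.
set sw := tperm t t1.
rewrite !pair_big_dep.
rewrite (reindex_inj (h := fun x : 'I_m * 'I_m => (sw x.1, sw x.2))) /=; last first.
  by move=> [a b] [c d] /= [/perm_inj -> /perm_inj ->].
rewrite (eq_bigr (fun x => G x.1 x.2)); last by move=> x _; rewrite !tpermK.
move: e => /= e.
rewrite (bigD1 (t1,t)) /=; last by rewrite /sw tpermR tpermL; lia.
rewrite [in RHS](bigD1 (t,t1)) /=; last lia.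
rewrite (eq_bigl (fun x : 'I_m * 'I_m => (x.1 < x.2)%N && (x != (t,t1)))); last first.
  move=> [a b] /=; rewrite /sw !val_tperm !xpair_eqE -!val_eqE /=.
  move: (nat_of_ord a) (nat_of_ord b) (nat_of_ord t) (nat_of_ord t1) e => a' b' t' t1' ->.
  by repeat case: eqP => ? /=; lia.
by rewrite Monoid.mulmAC [RHS]Monoid.mulmAC; congr (op _ _); apply: Monoid.mulmC.
Qed.


Definition fcons (m : nat) (T : finType) (x : T) (L : {ffun 'I_m -> T}) : {ffun 'I_m.+1 -> T} :=
  [ffun s : 'I_m.+1 => match unlift ord0 s with Some s' => L s' | None => x end].

Lemma fcons0 (m : nat) (T : finType) (x : T) (L : {ffun 'I_m -> T}) : fcons x L ord0 = x.
Proof. by rewrite ffunE unlift_none. Qed.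

Lemma fconsS (m : nat) (T : finType) (x : T) (L : {ffun 'I_m -> T}) s : fcons x L (lift ord0 s) = L s.
Proof. by rewrite ffunE liftK. Qed.

Lemma sum_ffunS (V : nmodType) (m : nat) (T : finType) (G : {ffun 'I_m.+1 -> T} -> V) :
 \sum_(L : {ffun 'I_m.+1 -> T}) G L = \sum_(x : T) \sum_(L' : {ffun 'I_m -> T}) G (fcons x L').
Proof.
rewrite pair_bigA /=.
have hb : bijective (fun pr : T * {ffun 'I_m -> T} => fcons pr.1 pr.2).
  exists (fun L : {ffun 'I_m.+1 -> T} => (L ord0, [ffun s' : 'I_m => L (lift ord0 s')])).
    move=> [x L] /=; congr pair; first by rewrite fcons0.
    by apply/ffunP => s; rewrite ffunE fconsS.
  move=> L /=; apply/ffunP => s; rewrite ffunE.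
  by case: unliftP => [j ->|->]; rewrite ?ffunE.
by rewrite (reindex _ (onW_bij _ hb)).
Qed.

Lemma rearr (V : zmodType) (x y z w : V) : x - w + (z - y) = x - y + z - w.
Proof. rewrite -!addrA; congr (_ + _); by rewrite (addrC z) (addrC z) !addrA (addrC (-w)). Qed.

Section Algebra.
Variables (n : nat) (q p : 'M[CC]_n) (A : algType CC) (M : 'M[A]_n).
Hypothesis Hq : parametric q.
Hypothesis Hp : parametric p.
Hypothesis HM : manin q p M.

Definition D (a b k l : 'I_n) : A := M a k * M b l - q b a *: (M b k * M a l).

Lemma param_inv (Q : 'M[CC]_n) : parametric Q -> forall a b, Q a b * Q b a = 1.
Proof. by move=> H a b; case: (H a b) => _ []. Qed.

Lemma param_neq0 (Q : 'M[CC]_n) : parametric Q -> forall a b, Q a b != 0.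
Proof. by move=> H a b; case: (H a b). Qed.

Lemma D_rows a b k l : D a b k l = - q b a *: D b a k l.
Proof.
rewrite /D scalerBr scalerA mulNr (param_inv Hq) scaleN1r opprK scaleNr.
by rewrite addrC.
Qed.

Lemma D_kk_lt (a b k : 'I_n) : (a < b)%N -> D a b k k = 0.
Proof. by move=> h; rewrite /D (HM.1 a b k h) subrr. Qed.

Lemma D_cols_lt (a b k l : 'I_n) : (a < b)%N -> (k < l)%N -> D a b k l + p k l *: D a b l k = 0.
Proof.
move=> hab hkl; rewrite -(HM.2 a b k l hab hkl) /D scalerBr scalerA [p k l * q b a]mulrC.
exact: rearr.
Qed.

Lemma D_kk (a b k : 'I_n) : a != b -> D a b k k = 0.
Proof.
rewrite -val_eqE => hab; case: (ltngtP a b) hab => h // _; first exact: D_kk_lt.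
by rewrite D_rows D_kk_lt // scaler0.
Qed.

Lemma D_cols_lt2 (a b k l : 'I_n) : (a < b)%N -> D a b l k = - p l k *: D a b k l.
Proof.
move=> hab; case: (ltngtP k l) => h.
- have := D_cols_lt hab h => /eqP; rewrite addr_eq0 => /eqP ->.
  by rewrite scalerN scaleNr opprK scalerA (param_inv Hp) scale1r.
- apply/eqP; rewrite scaleNr -addr_eq0; exact/eqP/D_cols_lt.
- have -> : k = l by apply: val_inj.
  by rewrite D_kk_lt // scaler0.
Qed.

Lemma D_cols (a b k l : 'I_n) : a != b -> D a b l k = - p l k *: D a b k l.
Proof.
rewrite -val_eqE => hab; case: (ltngtP a b) hab => h // _; first exact: D_cols_lt2.
rewrite D_rows (D_rows a b) D_cols_lt2 // !scalerA; congr (_ *: _).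
by rewrite mulrC.
Qed.

End Algebra.

Lemma eps_swap (n m : nat) (Q : 'M[CC]_n) (J : 'I_m -> 'I_n) (sg : 'S_m) (t t1 : 'I_m) :
  val t1 = (val t).+1 -> (sg t < sg t1)%N ->
  eps_perm Q J (tperm t t1 * sg)%g = - Q (J (sg t1)) (J (sg t)) * eps_perm Q J sg.
Proof.
move=> e h.
pose G (x y : 'I_m) := if (sg y < sg x)%N then - Q (J (sg x)) (J (sg y)) else 1.
have E1 : eps_perm Q J sg = \prod_(s : 'I_m) \prod_(u : 'I_m | (s < u)%N) G s u.
  by rewrite /eps_perm; apply: eq_bigr => s _; rewrite big_mkcondr.
have E2 : eps_perm Q J (tperm t t1 * sg)%g =
    \prod_(s : 'I_m) \prod_(u : 'I_m | (s < u)%N) G (tperm t t1 s) (tperm t t1 u).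
  rewrite /eps_perm; apply: eq_bigr => s _; rewrite big_mkcondr.
  by apply: eq_bigr => u _; rewrite !permM.
have := @pair_swap CC 1 *%R m t t1 e G.
rewrite -E1 -E2 /G ltnNge (ltnW h) /= h mulr1 => ->.
by rewrite mulrC.
Qed.



Lemma pair_sum (V : nmodType) m (t t1 : 'I_m) (e : val t1 = (val t).+1) (f : 'S_m -> V) :
  \sum_(sg : 'S_m) f sg = \sum_(sg : 'S_m | (sg t < sg t1)%N) (f sg + f (tperm t t1 * sg)%g).
Proof.
rewrite (bigID (fun sg : 'S_m => (sg t < sg t1)%N)) /= big_split /=; congr (_ + _).
rewrite (reindex_inj (mulgI (tperm t t1))) /=; apply: eq_bigl => sg.
rewrite !permM tpermL tpermR.
have : nat_of_ord (sg t) != sg t1.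
  rewrite val_eqE (inj_eq perm_inj) -val_eqE; move: e => /= ->; lia.
by move=> ne; rewrite -leqNgt leq_eqVlt (negbTE ne).
Qed.

Section ColSwap.
Variables (n : nat) (q p : 'M[CC]_n) (A : algType CC) (M : 'M[A]_n).
Hypothesis Hq : parametric q.
Hypothesis Hp : parametric p.
Hypothesis HM : manin q p M.
Variables (m : nat) (I : 'I_m -> 'I_n).
Hypothesis HI : increasing I.

Definition fL (L : 'I_m -> 'I_n) (sg : 'S_m) : A :=
  eps_perm q I sg *: \prod_(s < m) M (I (sg s)) (L s).

Lemma A_core (L : 'I_m -> 'I_n) (sg : 'S_m) (t t1 : 'I_m) :
  val t1 = (val t).+1 -> (sg t < sg t1)%N ->
  fL L sg + fL L (tperm t t1 * sg)%g = eps_perm q I sg *: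
   ((\prod_(s < m | (s < t)%N) M (I (sg s)) (L s)) * D q M (I (sg t)) (I (sg t1)) (L t) (L t1)
     * \prod_(s < m | (t1 < s)%N) M (I (sg s)) (L s)).
Proof.
move=> e h; rewrite /fL (eps_swap _ _ e h).
rewrite (big_split3 _ _ e) [X in _ + _ *: X](big_split3 _ _ e) /=.
rewrite !permM tpermL tpermR.
have -> : \prod_(s < m | (s < t)%N) M (I ((tperm t t1 * sg)%g s)) (L s) =
          \prod_(s < m | (s < t)%N) M (I (sg s)) (L s).
  apply: eq_bigr => s hs; rewrite permM tpermD // -val_eqE /=; move: e => /= e; lia.
have -> : \prod_(s < m | (t1 < s)%N) M (I ((tperm t t1 * sg)%g s)) (L s) =
          \prod_(s < m | (t1 < s)%N) M (I (sg s)) (L s).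
  apply: eq_bigr => s hs; rewrite permM tpermD // -val_eqE /=; move: e => /= e; lia.
rewrite /D mulrBr mulrBl scalerBr -scalerAr -scalerAl scalerA.
by rewrite mulNr scaleNr mulrC.
Qed.


Lemma cdet_ext (L L' : 'I_m -> 'I_n) : (forall s, L s = L' s) -> cdet q M I L = cdet q M I L'.
Proof. by move=> h; apply: eq_bigr => sg _; congr (_ *: _); apply: eq_bigr => s _; rewrite h. Qed.

Lemma neq_rows (sg : 'S_m) (t t1 : 'I_m) : val t1 = (val t).+1 -> I (sg t) != I (sg t1).
Proof.
move=> /= e; rewrite (inj_eq (incr_inj HI)) (inj_eq perm_inj) -val_eqE /= e; lia.
Qed.

Lemma colA1 (L : 'I_m -> 'I_n) (t t1 : 'I_m) : val t1 = (val t).+1 -> L t = L t1 ->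
  cdet q M I L = 0.
Proof.
move=> e hL; have -> : cdet q M I L = \sum_sg fL L sg by [].
rewrite (pair_sum e) big1 // => sg h.
by rewrite A_core // hL (D_kk Hq HM) ?mulr0 ?mul0r ?scaler0 // neq_rows.
Qed.

Lemma colA2 (L : 'I_m -> 'I_n) (t t1 : 'I_m) : val t1 = (val t).+1 ->
  cdet q M I (fun s => L (tperm t t1 s)) = - p (L t1) (L t) *: cdet q M I L.
Proof.
move=> e.
have -> : cdet q M I (fun s => L (tperm t t1 s)) = \sum_sg fL (fun s => L (tperm t t1 s)) sg by [].
have -> : cdet q M I L = \sum_sg fL L sg by [].
rewrite !(pair_sum e) scaler_sumr; apply: eq_bigr => sg h.
rewrite !A_core // tpermL tpermR (D_cols Hq Hp HM) ?neq_rows //.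
have -> : \prod_(s < m | (s < t)%N) M (I (sg s)) (L (tperm t t1 s)) =
          \prod_(s < m | (s < t)%N) M (I (sg s)) (L s).
  apply: eq_bigr => s hs; rewrite tpermD // -val_eqE /=; move: e => /= e; lia.
have -> : \prod_(s < m | (t1 < s)%N) M (I (sg s)) (L (tperm t t1 s)) =
          \prod_(s < m | (t1 < s)%N) M (I (sg s)) (L s).
  apply: eq_bigr => s hs; rewrite tpermD // -val_eqE /=; move: e => /= e; lia.
by rewrite -scalerAr -scalerAl !scalerA mulrC.
Qed.

Lemma scale_cancel (x : A) (c : CC) : c != 0 -> c *: x = 0 -> x = 0.
Proof. by move=> hc h; rewrite -[x]scale1r -(mulVf hc) -scalerA h scaler0. Qed.

Lemma colZ_aux k : forall (L : 'I_m -> 'I_n) (s u : 'I_m), val u = (val s + k.+1)%N ->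
  L s = L u -> cdet q M I L = 0.
Proof.
elim: k => [|k IH] L s u /= e hL; first by apply: (colA1 (t:=s) (t1:=u)); rewrite //= e addn1.
have hu' : ((u : nat).-1 < m)%N by move: (ltn_ord u); lia.
pose u' := Ordinal hu'.
have e1 : val u = (val u').+1 by rewrite /= e; lia.
have := colA2 L e1.
have -> : cdet q M I (fun x => L (tperm u' u x)) = 0.
  apply: (IH _ s u'); first by rewrite /= e; lia.
  rewrite tpermL tpermD //; rewrite -val_eqE /= ?e; lia.
move/esym/scale_cancel; apply.
by rewrite oppr_eq0 (param_neq0 Hp).
Qed.

Lemma colZ (L : 'I_m -> 'I_n) (s u : 'I_m) : s != u -> L s = L u -> cdet q M I L = 0.
Proof.
rewrite -val_eqE /= => ne hL; case: (ltngtP s u) ne => // h _.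
  by apply: (colZ_aux (k := (u - s.+1)%N) (s := s) (u := u)) => //=; lia.
by apply: (colZ_aux (k := (s - u.+1)%N) (s := u) (u := s)) => //=; lia.
Qed.

End ColSwap.

Definition Ncnt m (sg : 'S_m) : nat :=
  (\sum_(s : 'I_m) \sum_(u : 'I_m | (s < u)%N) (sg s < sg u : nat))%N.

Lemma N_swap m (sg : 'S_m) (t t1 : 'I_m) : val t1 = (val t).+1 -> (sg t < sg t1)%N ->
  (Ncnt (tperm t t1 * sg)%g + 1 = Ncnt sg)%N.
Proof.
move=> e h; rewrite /Ncnt.
have := @pair_swap nat 0%N addn m t t1 e (fun x y => (sg x < sg y : nat)).
rewrite /= h ltnNge (ltnW h) /= addn0 => <-; congr (_ + _)%N.
by apply: eq_bigr => s _; apply: eq_bigr => u _; rewrite !permM.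
Qed.

Lemma N0_rev m (sg : 'S_m) : Ncnt sg = 0%N -> forall s, sg s = rev_ord s.
Proof.
move=> /eqP; rewrite sum_nat_eq0 => /forallP H0.
have H : forall s u : 'I_m, (s < u)%N -> (sg u < sg s)%N.
  move=> s u su; have := H0 s; rewrite sum_nat_eq0 => /forallP /(_ u); rewrite su /=.
  have : nat_of_ord (sg s) != sg u.
    by rewrite val_eqE (inj_eq perm_inj) -val_eqE /=; lia.
  by move=> ne; rewrite eqn0Ngt lt0b => /negP h; lia.
have Hg : increasing (fun s => sg (rev_ord s)).
  by move=> a b ab; apply: H => /=; move: (ltn_ord a) (ltn_ord b); lia.
move=> s; have := incr_id Hg (rev_ord s); rewrite rev_ordK => ->.
by [].
Qed.

Lemma N_adj m (sg : 'S_m) : Ncnt sg <> 0%N ->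
  exists t t1 : 'I_m, val t1 = (val t).+1 /\ (sg t < sg t1)%N.
Proof.
move=> hN.
case: (boolP [exists t : 'I_m, exists t1 : 'I_m, (nat_of_ord t1 == (nat_of_ord t).+1) && (sg t < sg t1)%N]).
  by move=> /existsP [t /existsP [t1 /andP [/eqP e h]]]; exists t, t1.
move=> hn; exfalso; apply: hN.
have H : forall s u : 'I_m, (s < u)%N -> (sg u < sg s)%N.
  apply: (desc_adj (f := fun x => nat_of_ord (sg x))) => t t1 /= e.
  have : ~~ (sg t < sg t1)%N.
    apply/negP => h; move/negP: hn; apply; apply/existsP; exists t; apply/existsP; exists t1.
    by rewrite e eqxx h.
  have : nat_of_ord (sg t) != sg t1.
    by rewrite val_eqE (inj_eq perm_inj) -val_eqE /= e; lia.
  lia.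
apply/eqP; rewrite sum_nat_eq0; apply/forallP => s; rewrite sum_nat_eq0.
apply/forallP => u; apply/implyP => su; have := H _ _ su; lia.
Qed.

Lemma rev_tperm m (a b s : 'I_m) :
  rev_ord (tperm (rev_ord a) (rev_ord b) s) = tperm a b (rev_ord s).
Proof. by rewrite (inj_tperm _ _ _ rev_ord_inj) !rev_ordK. Qed.

Lemma pinvE n (Q : 'M[CC]_n) : parametric Q -> forall x y, pinv Q x y = Q y x.
Proof.
move=> H x y; rewrite /pinv mxE.
by rewrite -[Q y x]mul1r -(mulVf (param_neq0 H x y)) -mulrA (param_inv H) mulr1.
Qed.

Section Transfer.
Variables (n : nat) (q p : 'M[CC]_n) (A : algType CC) (M : 'M[A]_n).
Hypothesis Hq : parametric q.
Hypothesis Hp : parametric p.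
Hypothesis HM : manin q p M.
Variables (m : nat) (I : 'I_m -> 'I_n).
Hypothesis HI : increasing I.

Lemma transfer (K : 'I_m -> 'I_n) (HK : increasing K) (sg : 'S_m) :
  (eps p (mrev K) * eps_perm (pinv p) K sg) *: cdet q M I K
  = cdet q M I (fun s => K (sg (rev_ord s))).
Proof.
move: {2}(Ncnt sg) (erefl (Ncnt sg)) => k; elim: k sg => [|k IH] sg hN.
  have hs := N0_rev hN.
  rewrite (cdet_ext q M I (L' := K)); last by move=> s; rewrite hs rev_ordK.
  suff -> : eps p (mrev K) * eps_perm (pinv p) K sg = 1 by rewrite scale1r.
  rewrite /eps.
  have -> : [forall s, forall t, (s != t) ==> (mrev K s != mrev K t)] = true.
    apply/forallP => s; apply/forallP => t; apply/implyP => st.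
    by rewrite /mrev (inj_eq (incr_inj HK)) (inj_eq rev_ord_inj).
  rewrite /eps_perm -big_split /=; apply: big1 => s _.
  rewrite !big_mkcondr -big_split /=; apply: big1 => t st.
  have r : (rev_ord t < rev_ord s)%N by rewrite /=; move: (ltn_ord s) (ltn_ord t) st; lia.
  rewrite /mrev (incr_lt HK) !hs r mulrNN /pinv mxE mulfV //.
  exact: param_neq0.
have [t [t1 [e h]]] : exists t t1 : 'I_m, val t1 = (val t).+1 /\ (sg t < sg t1)%N.
  by apply: N_adj; rewrite hN.
have hN' : Ncnt (tperm t t1 * sg)%g = k by have := N_swap e h; lia.
have := IH _ hN'.
rewrite (eps_swap _ _ e h).
set L := fun s => K (sg (rev_ord s)).
have e' : val (rev_ord t) = (val (rev_ord t1)).+1.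
  by move: e (ltn_ord t1) => /= e; rewrite e; lia.
have E : cdet q M I (fun s => K ((tperm t t1 * sg)%g (rev_ord s))) =
         cdet q M I (fun s => L (tperm (rev_ord t1) (rev_ord t) s)).
  by apply: cdet_ext => s; rewrite /L permM rev_tperm tpermC.
rewrite E (colA2 Hq Hp HM HI L e') /L !rev_ordK (pinvE Hp) mulrCA => H.
apply: (scalerI (a := - p (K (sg t)) (K (sg t1)))); first by rewrite oppr_eq0 (param_neq0 Hp).
by rewrite /= scalerA H.
Qed.

End Transfer.

Definition incrb m n (K : {ffun 'I_m -> 'I_n}) : bool :=
  [forall s : 'I_m, forall t : 'I_m, (s < t)%N ==> (K s < K t)%N].

Lemma incrbP m n (K : {ffun 'I_m -> 'I_n}) : reflect (increasing K) (incrb K).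
Proof.
apply: (iffP idP).
  by move=> /forallP H s t st; move: (H s) => /forallP /(_ t); rewrite st.
by move=> H; apply/forallP => s; apply/forallP => t; apply/implyP => st; apply: H.
Qed.

Lemma sum_incr_perm (V : nmodType) m n (F : {ffun 'I_m -> 'I_n} -> V) :
  (forall L : {ffun 'I_m -> 'I_n}, ~~ injectiveb L -> F L = 0) ->
  \sum_(K : {ffun 'I_m -> 'I_n} | incrb K) \sum_(sg : 'S_m) F [ffun s => K (sg s)]
  = \sum_L F L.
Proof.
move=> F0; rewrite pair_big_dep /=.
pose h := fun x : {ffun 'I_m -> 'I_n} * {perm 'I_m} => [ffun s : 'I_m => x.1 (x.2 s)].
pose D := [set x : {ffun 'I_m -> 'I_n} * {perm 'I_m} | incrb x.1].
have -> : \sum_(x : {ffun 'I_m -> 'I_n} * {perm 'I_m} | incrb x.1 && true) F [ffun s => x.1 (x.2 s)] = \sum_(x in D) F (h x).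
  by apply: eq_bigl => x; rewrite inE andbT.
rewrite -big_imset; last first.
  move=> [K sg] [K' sg']; rewrite !inE /= => /incrbP HK /incrbP HK' eq.
  have E : forall s, K (sg s) = K' (sg' s).
    by move=> s; move/ffunP: eq => /(_ s); rewrite !ffunE.
  have hpi : forall x, (sg^-1 * sg')%g x = x.
    apply: (incr_perm_id HK HK') => x; rewrite permM -E permKV //.
  have eK : K = K'.
    by apply/ffunP => x; rewrite -[in RHS](hpi x) permM -E permKV.
  have esg : sg = sg'.
    by apply/permP => s; apply: (incr_inj HK); rewrite E eK.
  by rewrite eK esg.
rewrite [RHS](bigID (fun L : {ffun 'I_m -> 'I_n} => injectiveb L)) /= [X in _ = _ + X]big1 ?addr0; last first.
  by move=> L /F0.
apply: eq_bigl => L; apply/imsetP/idP.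
  move=> [[K sg]]; rewrite inE /= => /incrbP HK ->.
  by apply/injectiveP => x y; rewrite !ffunE => /(incr_inj HK)/perm_inj.
move/injectiveP => HL; have [K [rho [HK E]]] := rank_decomp HL.
exists ([ffun s => K s], rho); first by rewrite inE /=; apply/incrbP => s t st; rewrite !ffunE HK.
by apply/ffunP => s; rewrite !ffunE E.
Qed.

Lemma tele (n : nat) (A : algType CC) (M Minv : 'M[A]_n) : M *m Minv = 1%:M ->
  forall m (a j : 'I_m -> 'I_n),
  \sum_(L : {ffun 'I_m -> 'I_n})
     (\prod_(s < m) M (a s) (L (rev_ord s))) * (\prod_(s < m) Minv (L s) (j s))
  = if [forall s, a (rev_ord s) == j s] then 1 else 0.
Proof.
move=> HMi; elim=> [|m IH] a j.
  have -> : [forall s : 'I_0, a (rev_ord s) == j s] by apply/forallP => -[].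
  rewrite (eq_bigr (fun _ => 1)); last by move=> L _; rewrite !big_ord0 mulr1.
  by rewrite sumr_const card_ffun !card_ord expn0.
rewrite (@sum_ffunS _ m (ordinal n)).
have Er : forall s : 'I_m, rev_ord (widen_ord (leqnSn m) s) = lift ord0 (rev_ord s).
  by move=> s; apply: val_inj; rewrite /= /bump /=; move: (ltn_ord s); lia.
have Er0 : rev_ord (@ord_max m) = ord0 by apply: val_inj => /=; lia.
have Er1 : forall s : 'I_m, rev_ord (lift ord0 s) = widen_ord (leqnSn m) (rev_ord s).
  by move=> s; apply: val_inj; rewrite /= /bump /=; move: (ltn_ord s); lia.
have -> : \sum_x \sum_(L' : {ffun 'I_m -> 'I_n})
    (\prod_(s < m.+1) M (a s) (fcons x L' (rev_ord s))) *
    (\prod_(s < m.+1) Minv (fcons x L' s) (j s))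
  = \sum_(L' : {ffun 'I_m -> 'I_n}) \sum_x
    (\prod_(s < m) M (a (widen_ord (leqnSn m) s)) (L' (rev_ord s))) *
    (M (a ord_max) x * Minv x (j ord0)) *
    (\prod_(s < m) Minv (L' s) (j (lift ord0 s))).
  rewrite exchange_big; apply: eq_bigr => L' _; apply: eq_bigr => x _.
  rewrite big_ord_recr big_ord_recl /= Er0 fcons0.
  rewrite (eq_bigr (fun s : 'I_m => M (a (widen_ord (leqnSn m) s)) (L' (rev_ord s)))); last first.
    by move=> s _; rewrite Er fconsS.
  rewrite [in X in _ * (_ * X)](eq_bigr (fun s : 'I_m => Minv (L' s) (j (lift ord0 s)))); last first.
    by move=> s _; rewrite fconsS.
  by rewrite !mulrA.
have HS : \sum_x M (a ord_max) x * Minv x (j ord0) = ((a ord_max == j ord0)%:R : A).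
  by have := congr1 (fun X : 'M[A]_n => X (a ord_max) (j ord0)) HMi; rewrite /= !mxE => ->.
rewrite (eq_bigr (fun L' : {ffun 'I_m -> 'I_n} =>
    (\prod_(s < m) M (a (widen_ord (leqnSn m) s)) (L' (rev_ord s))) *
    ((a ord_max == j ord0)%:R : A) *
    (\prod_(s < m) Minv (L' s) (j (lift ord0 s))))); last first.
  by move=> L' _; rewrite -HS mulr_sumr mulr_suml.
have -> : [forall s : 'I_m.+1, a (rev_ord s) == j s] =
    (a ord_max == j ord0) && [forall s : 'I_m, a (widen_ord (leqnSn m) (rev_ord s)) == j (lift ord0 s)].
  apply/forallP/andP.
    move=> H; split; first by have := H ord0; rewrite -Er0 rev_ordK.
    by apply/forallP => s; have := H (lift ord0 s); rewrite Er1.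
  move=> [h /forallP H] s; case: (unliftP ord0 s) => [s' ->|->].
    by rewrite Er1 H.
  have Er0' : rev_ord (ord0 : 'I_m.+1) = ord_max by apply: val_inj => /=; lia.
  by rewrite Er0'.
case: (a ord_max == j ord0).
  rewrite /= -(IH (fun s => a (widen_ord (leqnSn m) s)) (fun s => j (lift ord0 s))).
  by apply: eq_bigr => L' _; rewrite mulr1.
by rewrite /= big1 // => L' _; rewrite mulr0 mul0r.
Qed.

Lemma sorted_incr m n (K : 'I_m -> 'I_n) : increasing K ->
  sorted leq [seq nat_of_ord (K s) | s <- enum 'I_m].
Proof.
move=> HK; rewrite sorted_map.
have : sorted ltn [seq nat_of_ord s | s <- enum 'I_m] by rewrite val_enum_ord iota_ltn_sorted.
rewrite sorted_map; apply: sub_sorted => x y /= xy; exact: ltnW (HK _ _ xy).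
Qed.

Lemma perm_enum_map m (rho : 'S_m) : perm_eq [seq rho s | s <- enum 'I_m] (enum 'I_m).
Proof.
apply: uniq_perm; first by rewrite (map_inj_uniq perm_inj) enum_uniq.
  exact: enum_uniq.
move=> x; rewrite mem_enum; apply/mapP; exists ((rho^-1)%g x); first by rewrite mem_enum.
by rewrite permKV.
Qed.

Lemma final_step n m (q : 'M[CC]_n) (A : algType CC) (I J : 'I_m -> 'I_n) :
  increasing I -> injective J ->
  \sum_(tau : 'S_m) eps_perm q I tau *:
      ((if [forall s, I (tau (rev_ord s)) == J s] then 1 else 0) : A)
  = (eps q (mrev J) * delta_or I J)%:A.
Proof.
move=> HI HJ; have [K [rho [HK EJ]]] := rank_decomp HJ.
have Emo : morder J = [seq nat_of_ord (K s) | s <- enum 'I_m].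
  rewrite /morder; apply: (sorted_eq leq_trans anti_leq).
  - exact: (sort_sorted leq_total).
  - exact: sorted_incr.
  rewrite perm_sort (eq_map (g := fun s => nat_of_ord (K (rho s)))); last by move=> s; rewrite EJ.
  by rewrite (map_comp (fun s => nat_of_ord (K s)) rho) perm_map // perm_enum_map.
have Edelta : delta_or I J = if [forall s, I s == K s] then 1 else 0.
  rewrite /delta_or Emo; congr (if _ then _ else _); apply/eqP/forallP.
    by move/eq_in_map => H s; apply/eqP/val_inj; apply: H; rewrite mem_enum.
  by move=> H; apply/eq_in_map => s _; rewrite (eqP (H s)).
rewrite Edelta; case: (boolP [forall s, I s == K s]) => hIK; last first.
  rewrite mulr0 scale0r big1 // => tau _.
  case: ifP => [/forallP H|]; last by rewrite scaler0.
  exfalso; move/negP: hIK; apply; apply/forallP => x; apply/eqP.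
  have E : forall y, K y = I (tau (rev_ord ((rho^-1)%g y))).
    by move=> y; rewrite -[in LHS](permKV rho y) -EJ; apply/esym/eqP/H.
  by rewrite E (incr_perm_id HK HI E x).
have EIK : forall s, I s = K s by move=> s; apply/eqP; move/forallP: hIK.
pose revp := perm (@rev_ord_inj m).
pose tau0 := (revp * rho)%g.
have Etau0 : forall x, tau0 x = rho (rev_ord x) by move=> x; rewrite permM permE.
have cond0 : [forall s, I (tau0 (rev_ord s)) == J s].
  by apply/forallP => s; rewrite Etau0 rev_ordK EIK EJ.
rewrite (bigD1 tau0) //= cond0 big1 ?addr0; last first.
  move=> tau ne; case: ifP => [/forallP H|]; last by rewrite scaler0.
  exfalso; move/eqP: ne; apply; apply/permP => x.
  apply: (incr_inj HI); rewrite Etau0 [in RHS]EIK -EJ -[in LHS](rev_ordK x).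
  exact/eqP/H.
congr (_ *: _); rewrite mulr1 /eps.
have -> : [forall s, forall t, (s != t) ==> (mrev J s != mrev J t)] = true.
  apply/forallP => s; apply/forallP => t; apply/implyP => st.
  by rewrite /mrev (inj_eq HJ) (inj_eq rev_ord_inj).
have EJ' : forall x, mrev J x = I (tau0 x) by move=> x; rewrite /mrev Etau0 EIK EJ.
rewrite /eps_perm; apply: eq_bigr => s _.
rewrite [in RHS](eq_bigl (fun t : 'I_m => (s < t)%N && (tau0 t < tau0 s)%N)); last first.
  by move=> t; rewrite !EJ' (incr_lt HI).
by apply: eq_bigr => t _; rewrite !EJ'.
Qed.

Lemma cdet_ext2 n (Q : 'M[CC]_n) (A : algType CC) (X : 'M[A]_n) m (I I' L L' : 'I_m -> 'I_n) :
  (forall s, I s = I' s) -> (forall s, L s = L' s) -> cdet Q X I L = cdet Q X I' L'.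
Proof.
move=> HI HL; apply: eq_bigr => sg _; congr (_ *: _).
  by apply: eq_bigr => s _; apply: eq_bigr => t _; rewrite !HI.
by apply: eq_bigr => s _; rewrite HI HL.
Qed.

Lemma eps_ext n (Q : 'M[CC]_n) m (I I' : 'I_m -> 'I_n) :
  (forall s, I s = I' s) -> eps Q I = eps Q I'.
Proof.
move=> H; rewrite /eps.
have -> : [forall s, forall t, (s != t) ==> (I s != I t)] =
          [forall s, forall t, (s != t) ==> (I' s != I' t)].
  by apply: eq_forallb => s; apply: eq_forallb => t; rewrite !H.
case: ifP => // _; apply: eq_bigr => s _.
by apply: eq_big => [t|t _]; rewrite !H.
Qed.

Theorem mainTheorem6 (n : nat) (q p : 'M[CC]_n) (A : algType CC)
    (M Minv : 'M[A]_n) :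
  parametric q -> parametric p -> manin q p M ->
  M *m Minv = 1%:M -> Minv *m M = 1%:M ->
  (forall (m : nat) (I J : 'I_m -> 'I_n),
      (1 <= m)%N -> (m <= n)%N -> increasing I -> injective J ->
      \sum_(K : {ffun 'I_m -> 'I_n} | [forall s : 'I_m, forall t : 'I_m,
                                          (s < t)%N ==> (K s < K t)%N])
         eps p (mrev K) *: (cdet q M I K * cdet (pinv p) Minv K J)
      = (eps q (mrev J) * delta_or I J)%:A)
  /\
  cdet q M id id * cdet (pinv p) Minv id id
    = ((eps p (@rev_ord n))^-1 * eps q (@rev_ord n))%:A.
Proof.
move=> Hq Hp HM HMi _.
have part1 : forall m (I J : 'I_m -> 'I_n), increasing I -> injective J ->
      \sum_(K : {ffun 'I_m -> 'I_n} | [forall s : 'I_m, forall t : 'I_m,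
                                          (s < t)%N ==> (K s < K t)%N])
         eps p (mrev K) *: (cdet q M I K * cdet (pinv p) Minv K J)
      = (eps q (mrev J) * delta_or I J)%:A.
  move=> m I J HI HJ.
  pose F := fun L : {ffun 'I_m -> 'I_n} =>
    cdet q M I (fun s => L (rev_ord s)) * \prod_(s < m) Minv (L s) (J s).
  transitivity (\sum_(K | incrb K) \sum_(sg : 'S_m) F [ffun s => K (sg s)]).
    apply: eq_bigr => K /incrbP HK.
    have -> : cdet (pinv p) Minv K J = \sum_(sg : 'S_m)
       eps_perm (pinv p) K sg *: \prod_(s < m) Minv (K (sg s)) (J s) by [].
    rewrite mulr_sumr scaler_sumr; apply: eq_bigr => sg _.
    rewrite -scalerAr scalerA scalerAl (transfer Hq Hp HM HI HK sg) /F.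
    congr (_ * _); first by apply: cdet_ext => s; rewrite ffunE.
    by apply: eq_bigr => s _; rewrite ffunE.
  rewrite sum_incr_perm; last first.
    move=> L hL.
    have [x [y [xy Lxy]]] : exists x y, x != y /\ L x = L y.
      case: (boolP [exists x, exists y, (x != y) && (L x == L y)]).
        by move=> /existsP [x /existsP [y /andP [xy /eqP Lxy]]]; exists x, y.
      move=> hn; exfalso; move/negP: hL; apply; apply/injectiveP => x y Lxy.
      apply/eqP; apply: contraR hn => xy; apply/existsP; exists x; apply/existsP; exists y.
      by rewrite xy Lxy eqxx.
    rewrite /F (colZ Hq Hp HM HI (s := rev_ord x) (u := rev_ord y)) ?mul0r //.
      by rewrite (inj_eq rev_ord_inj).
    by rewrite !rev_ordK.
  rewrite /F.
  have -> : \sum_(L : {ffun 'I_m -> 'I_n})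
      cdet q M I (fun s => L (rev_ord s)) * \prod_(s < m) Minv (L s) (J s) =
    \sum_(tau : 'S_m) eps_perm q I tau *: \sum_(L : {ffun 'I_m -> 'I_n})
      (\prod_(s < m) M (I (tau s)) (L (rev_ord s))) * \prod_(s < m) Minv (L s) (J s).
    rewrite (eq_bigr (fun L : {ffun 'I_m -> 'I_n} => \sum_(tau : 'S_m) eps_perm q I tau *:
      ((\prod_(s < m) M (I (tau s)) (L (rev_ord s))) * \prod_(s < m) Minv (L s) (J s)))); last first.
      by move=> L _; rewrite /cdet mulr_suml; apply: eq_bigr => tau _; rewrite -scalerAl.
    by rewrite exchange_big; apply: eq_bigr => tau _; rewrite scaler_sumr.
  rewrite -(final_step q A HI HJ); apply: eq_bigr => tau _.
  by rewrite (tele HMi (fun s => I (tau s)) J).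
split; first by move=> m I J _ _; exact: part1.
have Hid : increasing (fun s : 'I_n => s) by [].
have := part1 n (fun s => s) (fun s => s) Hid (fun x y (h : x = y) => h).
rewrite (bigD1 [ffun s => s]); last by apply/incrbP => s t; rewrite !ffunE.
rewrite big1 ?addr0; last first.
  move=> K /andP [/incrbP HK ne]; exfalso; move/eqP: ne; apply.
  by apply/ffunP => s; rewrite ffunE (incr_id HK).
have -> : delta_or (fun s : 'I_n => s) (fun s => s) = 1.
  rewrite /delta_or /morder sorted_sort ?eqxx //; first exact: leq_trans.
  exact: sorted_incr.
rewrite (eps_ext p (I' := @rev_ord n)); last by move=> s; rewrite /mrev ffunE.
rewrite (cdet_ext2 q M (I' := id) (L' := id)) //; last by move=> s; rewrite ffunE.
rewrite (cdet_ext2 (pinv p) Minv (I' := id) (L' := id)) //; last by move=> s; rewrite ffunE.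
have ne : eps p (@rev_ord n) != 0.
  rewrite /eps.
  have -> : [forall s, forall t, (s != t) ==> (@rev_ord n s != rev_ord t)] = true.
    apply/forallP => s; apply/forallP => t; apply/implyP => st.
    by rewrite (inj_eq rev_ord_inj).
  apply/prodf_neq0 => s _; apply/prodf_neq0 => t _.
  by rewrite oppr_eq0 (param_neq0 Hp).
move=> H; rewrite Monoid.mulm1 (eps_ext q (I' := @rev_ord n)) // mulr1 in H.
apply: (scalerI ne); rewrite H /= scalerA mulrA mulfV // mul1r.
by [].
Qed.
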